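(* Let $X$ be a $T_0$ space. The following conditions are equivalent: (1) The $GSI_2$-convergence structure in $X$ is topological, i.e. for every net $(x_i)_{i\in I}$ in $X$ and every $x\in X$, $(x_i)_{i\in I}$ $GSI_2$-converges to $x$ if and only if $(x_i)_{i\in I}$ converges to $x$ with respect to the topology $\mathcal{O}(\mathcal{GSI}_2(X))$. (2) For any net $(x_i)_{i \in I}$ in $X$ and $x \in X$, $(x_i)_{i\in I}$ $GSI_2$-converges to $x$ if and only if $(x_i)_{i \in I}$ converges to $x$ with respect to the $SI_2$-topology $\mathcal{O}_{SI_2}(X)$. (3) $X$ is strongly $QI_2$-continuous.
   Context: For a $T_0$ space $X$, the specialization order is $x\le y$ iff $x\in \mathrm{cl}\{y\}$; all order notions refer to it. For $A\subseteq X$, $\uparrow A=\{x: a\le x \text{ for some } a\in A\}$, $\uparrow x=\uparrow\{x\}$; $A^{\uparrow}$ is the set of upper bounds of $A$, $A^{\downarrow}$ the set of lower bounds of $A$, and the cut of $A$ is $A^\delta=(A^\uparrow)^\downarrow$. A nonempty $A\subseteq X$ is irreducible if whenever $A\subseteq F_1\cup F_2$ with $F_1,F_2$ closed, then $A\subseteq F_1$ or $A\subseteq F_2$; $\mathrm{Irr}(X)$ denotes the set of irreducible subsets. $X^{(<\omega)}$ is the set of nonempty finite subsets of $X$. $Q(X)$ is the set of nonempty compact saturated (i.e. upper) subsets of $X$; $P_S(X)$ (the Smyth power space) is $Q(X)$ with the upper Vietoris topology, having basis $\{\square U: U \text{ open in } X\}$ where $\square U=\{Q\in Q(X): Q\subseteq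 U\}$. A net $(x_i)_{i\in I}$ is eventually in $U$ if there is $i_0$ with $x_i\in U$ for all $i\ge i_0$; it converges to $x$ in a topology if it is eventually in every open set containing $x$. A subset $U\subseteq X$ is $SI_2$-open if $U$ is open in $X$ and for every $F\in \mathrm{Irr}(X)$, $F^\delta\cap U\neq\emptyset$ implies $F\cap U\ne\emptyset$; the $SI_2$-open sets form a topology $\mathcal{O}_{SI_2}(X)$. A net $(x_i)_{i\in I}$ in $X$ $GSI_2$-converges to $x\in X$ if there exists $\mathcal{F}\subseteq X^{(<\omega)}$ such that $\{\uparrow F: F\in\mathcal F\}$ is an irreducible subset of $P_S(X)$ and (i) for every open $U$ of $X$, if $\uparrow F\subseteq U$ for some $F\in\mathcal F$, then $x_i\in U$ eventually; and (ii) $\bigcap_{F\in\mathcal F}\uparrow F\subseteq \uparrow x$. Let $\mathcal{GSI}_2(X)$ be the class of all pairs (net, point) with the net $GSI_2$-converging to the point, and $\mathcal{O}(\mathcal{GSI}_2(X))=\{U\subseteq X: \text{whenever } (x_i)_{i\in I} \text{ } GSI_2\text{-converges to } x\in U, \ x_i\in U \text{ eventually}\}$. For $A,B\subseteq X$, $A\ll_{I_2} B$ means: for every irreducible $D\subseteq X$, $D^\delta\cap B\ne\emptyset$ implies $A\cap \mathrm{cl}D\neq\emptyset$; write $A\ll_{I_2}x$ for $A\ll_{I_2}\{x\}$. For $x\in X$ let $w(x)=\{\uparrow F: F\in X^{(<\omega)}, F\ll_{I_2}x\}$. $X$ is $QI_2$-continuous if for every $x\in X$, $w(x)$ is an irreducible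 subset of $P_S(X)$ and $\uparrow x=\bigcap w(x)$. $X$ is strongly $QI_2$-continuous if it is $QI_2$-continuous and for every $F\in X^{(<\omega)}$, $x\in X$ with $F\ll_{I_2}x$ and every open $U$ with $F\subseteq U$, there is an $SI_2$-open set $W$ with $x\in W\subseteq U$. *)

(* Defs.v *)
From HB Require Import structures.
From mathcomp Require Import all_boot all_order.
From mathcomp Require Import all_classical.
From mathcomp Require Import topology.
Set Implicit Arguments. Unset Strict Implicit. Unset Printing Implicit Defensive.
Local Open Scope classical_set_scope.

Record directed_set := DirectedSet {
  dcarrier :> Type;
  dle : dcarrier -> dcarrier -> Prop;
  dle_refl : forall i, dle i i;
  dle_trans : forall i j k, dle i j -> dle j k -> dle i k;
  dnonempty : inhabited dcarrier;
  ddirected : forall i j, exists k, dle i k /\ dle j k }.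

Definition eventually_in {T : Type} (I : directed_set) (x : I -> T) (U : set T) :=
  exists i0 : I, forall i : I, dle i0 i -> U (x i).

Definition net_conv_in {T : Type} (op : set T -> Prop) (I : directed_set)
  (x : I -> T) (x0 : T) :=
  forall U, op U -> U x0 -> eventually_in x U.

Definition irreducible_in {T : Type} (op : set T -> Prop) (A : set T) :=
  A !=set0 /\
  forall O1 O2, op O1 -> op O2 -> A `<=` (~` O1) `|` (~` O2) ->
    A `<=` ~` O1 \/ A `<=` ~` O2.

Section Spaces.
Context {X : topologicalType}.

Definition spec_le (x y : X) := closure [set y] x.
Definition upset (A : set X) := [set x | exists2 a, A a & spec_le a x].
Definition upper_bounds (A : set X) := [set u | forall a, A a -> spec_le a u].
Definition lower_bounds (A : set X) := [set l | forall a, A a -> spec_le l a].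
Definition cut (A : set X) := lower_bounds (upper_bounds A).

Definition Irr (A : set X) := irreducible_in (@open X) A.

Definition finite_nonempty (F : set X) := finite_set F /\ F !=set0.

Definition QX (A : set X) := [/\ A !=set0, compact A & upset A `<=` A].

(* Upper Vietoris topology on Q(X) (Smyth power space), open sets seen as
   subsets of set X contained in Q(X): unions of basic sets box U. *)
Definition box (U : set X) := [set Q | QX Q /\ Q `<=` U].
Definition PS_open (O : set (set X)) :=
  O `<=` QX /\ forall Q, O Q -> exists U, [/\ open U, Q `<=` U & box U `<=` O].

Definition PS_irreducible (A : set (set X)) :=
  A `<=` QX /\ irreducible_in PS_open A.

Definition SI2_open (U : set X) :=
  open U /\ forall F, Irr F -> cut F `&` U !=set0 -> F `&` U !=set0.

Definition GSI2_conv (I : directed_set) (x : I -> X) (x0 : X) :=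
  exists FF : set (set X),
    [/\ FF `<=` finite_nonempty,
        PS_irreducible [set upset F | F in FF],
        (forall U, open U -> (exists2 F, FF F & upset F `<=` U) ->
            eventually_in x U) &
        \bigcap_(F in FF) upset F `<=` upset [set x0]].

Definition GSI2_open (U : set X) :=
  forall (I : directed_set) (x : I -> X) (x0 : X),
    GSI2_conv x x0 -> U x0 -> eventually_in x U.

Definition ll_I2 (A B : set X) :=
  forall D, Irr D -> cut D `&` B !=set0 -> A `&` closure D !=set0.

Definition w_set (x : X) :=
  [set upset F | F in [set F | finite_nonempty F /\ ll_I2 F [set x]]].

Definition QI2_continuous :=
  forall x : X, PS_irreducible (w_set x) /\
                upset [set x] = \bigcap_(Q in w_set x) Q.

Definition strongly_QI2_continuous :=
  QI2_continuous /\
  forall (F : set X) (x : X) (U : set X), finite_nonempty F -> ll_I2 F [set x] ->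
    open U -> F `<=` U -> exists W, [/\ SI2_open W, W x & W `<=` U].

End Spaces.

(* Main.v *)
Require Import Defs.
From HB Require Import structures.
From mathcomp Require Import all_boot all_order.
From mathcomp Require Import all_classical.
From mathcomp Require Import topology.
Set Implicit Arguments. Unset Strict Implicit.
Local Open Scope classical_set_scope.

Lemma spec_refl {X : topologicalType} (x : X) : spec_le x x.
Proof. exact: subset_closure. Qed.

Lemma open_up {X : topologicalType} (U : set X) x y :
  open U -> U x -> spec_le x y -> U y.
Proof.
move=> oU Ux /(_ U (open_nbhs_nbhs (conj oU Ux))) [z [/= -> //]].
Qed.

Lemma closed_down {X : topologicalType} (A : set X) x y :
  closed A -> A y -> spec_le x y -> A x.
Proof.
move=> cA Ay xy; apply: contrapT => nAx.
have := @open_up X (~` A) x y; rewrite openC => /(_ cA nAx xy); exact.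
Qed.

Lemma spec_trans {X : topologicalType} (x y z : X) :
  spec_le x y -> spec_le y z -> spec_le x z.
Proof.
move=> xy yz; apply: (closed_down (@closed_closure _ [set z]) yz xy).
Qed.

Lemma upset_sub {X : topologicalType} (F : set X) : F `<=` upset F.
Proof. by move=> x Fx; exists x => //; exact: spec_refl. Qed.

Lemma upset_up {X : topologicalType} (F : set X) : upset (upset F) `<=` upset F.
Proof. by move=> x [y [a Fa ay] yx]; exists a => //; exact: spec_trans ay yx. Qed.

Lemma upset_open {X : topologicalType} (F U : set X) :
  open U -> F `<=` U -> upset F `<=` U.
Proof. by move=> oU FU x [a /FU Ua ax]; exact: open_up Ua ax. Qed.

Lemma upset1 {X : topologicalType} (x y : X) : upset [set x] y <-> spec_le x y.
Proof. by split => [[a /= -> //]|xy]; exists x. Qed.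

Lemma compact_upset1 {X : topologicalType} (x : X) : compact (upset [set x]).
Proof.
move=> F PF Fu; exists x; split; first by apply/upset1; exact: spec_refl.
move=> A B FA /=; rewrite nbhsE => -[V [oV Vx] VB].
have : F (A `&` upset [set x]) by apply: filterI.
move=> /filter_ex [y [Ay /upset1 xy]]; exists y; split => //.
by apply: VB; exact: open_up Vx xy.
Qed.

Lemma upset_cons {X : topologicalType} (a : X) (s : seq X) :
  upset [set` (a :: s)] = upset [set a] `|` upset [set` s].
Proof.
apply/seteqP; split => y.
  move=> [b] /=; rewrite in_cons => /orP[/eqP ->|bs] ay; [left; exists a|right; exists b] => //.
move=> [[b /= ba ay]|[b /= bs ay]]; exists b => //=.
  by rewrite in_cons ba eqxx.
by rewrite in_cons bs orbT.
Qed.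

Lemma compact_upset_fin {X : topologicalType} (F : set X) :
  finite_set F -> compact (upset F).
Proof.
move=> /finite_seqP [s ->]; elim: s => [|a s IH].
  have -> : upset [set` [::]] = (set0 : set X).
    by apply/seteqP; split => y // [b].
  exact: compact0.
rewrite upset_cons; apply: compactU => //; exact: compact_upset1.
Qed.

Lemma QX_upset {X : topologicalType} (F : set X) :
  finite_nonempty F -> QX (upset F).
Proof.
move=> [fF [x Fx]]; split; first by exists x; exact: upset_sub.
  exact: compact_upset_fin.
exact: upset_up.
Qed.

Lemma box_open {X : topologicalType} (U : set X) : open U -> PS_open (box U).
Proof. by move=> oU; split => [Q [] //|Q [_ QU]]; exists U; split. Qed.

Lemma Irr_meet {X : topologicalType} (D U1 U2 : set X) : Irr D -> open U1 -> open U2 ->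
  D `&` U1 !=set0 -> D `&` U2 !=set0 -> D `&` (U1 `&` U2) !=set0.
Proof.
move=> [_ irr] o1 o2 [a [Da U1a]] [b [Db U2b]]; apply: contrapT => H.
have : D `<=` ~` U1 `|` ~` U2.
  move=> d Dd; apply: contrapT => /not_orP [/contrapT h1 /contrapT h2].
  by apply: H; exists d.
move=> /(irr _ _ o1 o2) [h|h]; [exact: (h a)|exact: (h b)].
Qed.

Lemma Irr1 {X : topologicalType} (x : X) : Irr [set x].
Proof.
split; first by exists x.
move=> O1 O2 _ _ /(_ x erefl) [h|h]; [left|right] => y /= ->; exact: h.
Qed.

Lemma cut1 {X : topologicalType} (x : X) : cut [set x] x.
Proof. by move=> u /(_ x erefl). Qed.

Definition base_ok {X : topologicalType} (B : set (set X)) :=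
  [/\ exists W, B W, forall W, B W -> W !=set0 &
      forall W1 W2, B W1 -> B W2 -> exists2 W3, B W3 & W3 `<=` W1 `&` W2].

Definition bidx {X : topologicalType} (B : set (set X)) :=
  {p : set X * X | B p.1 /\ p.1 p.2}.
Definition ble {X : topologicalType} (B : set (set X)) (p q : bidx B) :=
  (sval q).1 `<=` (sval p).1.

Lemma ble_refl {X : topologicalType} (B : set (set X)) (p : bidx B) : ble p p.
Proof. by []. Qed.
Lemma ble_trans {X : topologicalType} (B : set (set X)) (p q r : bidx B) :
  ble p q -> ble q r -> ble p r.
Proof. by move=> pq qr x /qr /pq. Qed.

Lemma bnonempty {X : topologicalType} (B : set (set X)) :
  base_ok B -> inhabited (bidx B).
Proof.
case=> [[W BW] ne _]; have [y Wy] := ne W BW.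
exact: (inhabits (exist _ (W, y) (conj BW Wy))).
Qed.

Lemma bdirected {X : topologicalType} (B : set (set X)) :
  base_ok B -> forall i j : bidx B, exists k, ble i k /\ ble j k.
Proof.
case=> [_ ne dir] [[Wi yi] pi] [[Wj yj] pj].
have [W3 B3 W3s] := dir _ _ (proj1 pi) (proj1 pj); have [y Wy] := ne W3 B3.
exists (exist _ (W3, y) (conj B3 Wy)); split => x /W3s [] //.
Qed.

Definition bnet {X : topologicalType} (B : set (set X)) (h : base_ok B) :
  directed_set :=
  @DirectedSet (bidx B) (@ble X B) (@ble_refl X B) (@ble_trans X B)
    (bnonempty h) (bdirected h).

Definition bfun {X : topologicalType} (B : set (set X)) (h : base_ok B) :
  bnet h -> X := fun p => (sval p).2.

Lemma bnet_ev {X : topologicalType} (B : set (set X)) (h : base_ok B) (U : set X) :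
  eventually_in (@bfun X B h) U <-> exists2 W, B W & W `<=` U.
Proof.
split.
  move=> [[[W0 y0] p0] H]; have [B0 W0y0] := p0; exists W0 => // y W0y.
  exact: (H (exist _ (W0, y) (conj B0 W0y))).
move=> [W BW WU]; case: h => [hex ne dir]; have [y Wy] := ne W BW.
exists (exist _ (W, y) (conj BW Wy)) => -[[W' y'] p'] /= le.
have [B' W'y'] := p'.
by apply: WU; apply: le.
Qed.

Lemma in_cons_neq {T : eqType} (a g : T) (s : seq T) :
  g \in a :: s -> g <> a -> g \in s.
Proof. by rewrite in_cons => /orP[/eqP ->|//]. Qed.

Lemma chain_list {X : topologicalType} (Cp : X -> Prop) (s : seq X) :
  forall (Ch : set (set X)),
  total_on Ch subset -> (exists g, g \in s /\ Cp g) ->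
  (forall B, Ch B -> exists g, [/\ g \in s, Cp g & ~ B g]) ->
  exists g, [/\ g \in s, Cp g & forall B, Ch B -> ~ B g].
Proof.
elim: s => [|a s IH] Ch tot [g [gs Cg]] H; first by [].
have [Ca|nCa] := pselect (Cp a); last first.
  have gna : g <> a by move=> ga; apply: nCa; rewrite -ga.
  have E1 : exists g, g \in s /\ Cp g.
    by exists g; split => //; exact: in_cons_neq gs gna.
  have E2 : forall B, Ch B -> exists g, [/\ g \in s, Cp g & ~ B g].
    move=> B ChB; have [k [ks Ck nBk]] := H B ChB; exists k; split => //.
    apply: in_cons_neq ks _ => ka; apply: nCa; rewrite -ka //.
  have [h [hs Ch' nB]] := IH Ch tot E1 E2.
  by exists h; split => //; rewrite in_cons hs orbT.
have [[B0 ChB0 B0a]|nex] := pselect (exists2 B0, Ch B0 & B0 a); last first.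
  exists a; split => //; first by rewrite in_cons eqxx.
  by move=> B ChB Ba; apply: nex; exists B.
pose Ch' := [set B | Ch B /\ B0 `<=` B].
have T1 : total_on Ch' subset by move=> B1 B2 [C1 _] [C2 _]; exact: tot.
have E1 : exists g, g \in s /\ Cp g.
  have [k [ks Ck nBk]] := H B0 ChB0; exists k; split => //.
  by apply: in_cons_neq ks _ => ka; apply: nBk; rewrite ka.
have E2 : forall B, Ch' B -> exists g, [/\ g \in s, Cp g & ~ B g].
  move=> B [ChB B0B]; have [k [ks Ck nBk]] := H B ChB; exists k; split => //.
  by apply: in_cons_neq ks _ => ka; apply: nBk; rewrite ka; exact: B0B.
have [h [hs Ch'h nB]] := IH Ch' T1 E1 E2.
exists h; split => //; first by rewrite in_cons hs orbT.
move=> B ChB Bh; have [B0B|BB0] := tot _ _ ChB0 ChB.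
  exact: (nB B (conj ChB B0B)).
by apply: (nB B0 (conj ChB0 (fun _ x => x))); exact: BB0.
Qed.

Lemma rudin {X : topologicalType} (FF : set (set X)) (x0 : X) (C : set X) :
  FF `<=` finite_nonempty -> PS_irreducible [set upset F | F in FF] ->
  \bigcap_(F in FF) upset F `<=` upset [set x0] -> closed C ->
  (forall F, FF F -> F `&` C !=set0) ->
  exists A, [/\ closed A, A `<=` C, Irr A, cut A x0 &
                forall F, FF F -> F `&` A !=set0].
Proof.
move=> FFfin [FFQ [FFne FFirr]] FFx cC FFC.
pose P (B : set X) := open B /\ forall F, FF F -> exists g, [/\ F g, C g & ~ B g].
have chainP : forall Ch, Ch `<=` P -> total_on Ch subset ->
    P (\bigcup_(B in Ch) B).
  move=> Ch ChP tot; split; first by apply: bigcup_open => B /ChP [].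
  move=> F FF_F; have [/finite_seqP [s sE] _] := FFfin F FF_F.
  have [g [Fg Cg]] := FFC F FF_F.
  have E1 : exists g, g \in s /\ C g.
    by exists g; split => //; rewrite sE in Fg.
  have E2 : forall B, Ch B -> exists g, [/\ g \in s, C g & ~ B g].
    move=> B /ChP [_ /(_ F FF_F)] [h [Fh Ch' nBh]]; exists h; split => //.
    by rewrite sE in Fh.
  have [h [hs Ch' nB]] := chain_list tot E1 E2.
  exists h; split => //; first by rewrite sE.
  by move=> [B ChB Bh]; exact: nB ChB Bh.
have [B [[oB PB] Bmax]] := Zorn_bigcup chainP.
pose A := ~` B `&` C.
have cA : closed A by apply: closedI => //; rewrite closedC.
have AC : A `<=` C by move=> ? [].
have meet : forall F, FF F -> F `&` A !=set0.
  by move=> F /PB [g [Fg Cg nBg]]; exists g.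
have maxO : forall O, open O ->
    O `<=` B \/ exists2 F, FF F & forall g, F g -> A g -> O g.
  move=> O oO; have [PBO|nPBO] := pselect (P (B `|` O)).
    left; have nprop : ~ (B `<` B `|` O) by move=> /Bmax; apply.
    move=> y Oy; apply: contrapT => nBy; apply: nprop; split.
      by move=> ? ?; left.
    by move=> /(_ y (or_intror Oy)).
  right; apply: contrapT => H; apply: nPBO; split; first exact: openU.
  move=> F FF_F; apply: contrapT => nex; apply: H; exists F => // g Fg [nBg Cg].
  apply: contrapT => nOg; apply: nex; exists g; split => //; by move=> [].
exists A; split => //.
- split.
    have [_ [F FF_F _]] := FFne; have [g [Fg Ag]] := meet F FF_F; by exists g.
  move=> O1 O2 o1 o2 AO.
  case: (maxO O1 o1) => [O1B|[F1 FF1 H1]]; first by left => y [nBy _] /O1B.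
  case: (maxO O2 o2) => [O2B|[F2 FF2 H2]]; first by right => y [nBy _] /O2B.
  exfalso.
  pose V1 := ~` (A `&` ~` O1); pose V2 := ~` (A `&` ~` O2).
  have oV1 : open V1 by rewrite openC; apply: closedI => //; rewrite closedC.
  have oV2 : open V2 by rewrite openC; apply: closedI => //; rewrite closedC.
  have bF1 : box V1 (upset F1).
    split; first exact: QX_upset (FFfin _ FF1).
    by apply: upset_open => // g Fg [Ag]; apply; exact: H1.
  have bF2 : box V2 (upset F2).
    split; first exact: QX_upset (FFfin _ FF2).
    by apply: upset_open => // g Fg [Ag]; apply; exact: H2.
  have [F3 FF3 [b1 b2]] : exists2 F3, FF F3 & box V1 (upset F3) /\ box V2 (upset F3).
    apply: contrapT => nex.
    have : [set upset F | F in FF] `<=` ~` box V1 `|` ~` box V2.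
      move=> Q [F FF_F <-]; apply: contrapT => /not_orP [/contrapT h1 /contrapT h2].
      by apply: nex; exists F.
    move=> /(FFirr _ _ (box_open oV1) (box_open oV2)) [h|h].
      by apply: (h (upset F1)) => //; exists F1.
    by apply: (h (upset F2)) => //; exists F2.
  have [g [F3g Ag]] := meet F3 FF3.
  have g1 : V1 g by apply: b1.2; exact: upset_sub.
  have g2 : V2 g by apply: b2.2; exact: upset_sub.
  have O1g : O1 g by apply: contrapT => nO; apply: g1.
  have O2g : O2 g by apply: contrapT => nO; apply: g2.
  by case: (AO g Ag).
- move=> u ub; apply/upset1; apply: FFx => F FF_F.
  by have [a [Fa Aa]] := meet F FF_F; exists a => //; exact: ub.
Qed.

Lemma R_core {X : topologicalType} (FF : set (set X)) (x0 : X) (W : set X) :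
  FF `<=` finite_nonempty -> PS_irreducible [set upset F | F in FF] ->
  \bigcap_(F in FF) upset F `<=` upset [set x0] ->
  SI2_open W -> W x0 -> exists2 F, FF F & F `<=` W.
Proof.
move=> FFfin FFirr FFx [oW SW] Wx; apply: contrapT => nex.
have cC : closed (~` W) by rewrite closedC.
have [|A [cA AC IrrA cutA _]] := rudin FFfin FFirr FFx cC.
  move=> F FF_F; apply: contrapT => nm; apply: nex; exists F => // f Ff.
  by apply: contrapT => nWf; apply: nm; exists f.
have [a [Aa Wa]] := SW A IrrA (ex_intro _ x0 (conj cutA Wx)).
exact: AC a Aa Wa.
Qed.

Lemma ev_mono {X : topologicalType} (I : directed_set) (x : I -> X) (U V : set X) :
  U `<=` V -> eventually_in x U -> eventually_in x V.
Proof. by move=> UV [i0 H]; exists i0 => i /H /UV. Qed.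

Lemma GSI2_SI2 {X : topologicalType} (I : directed_set) (x : I -> X) (x0 : X) :
  GSI2_conv x x0 -> net_conv_in (@SI2_open X) x x0.
Proof.
move=> [FF [FFfin FFirr FFi FFx]] W SW Wx.
have [F FF_F FW] := R_core FFfin FFirr FFx SW Wx.
apply: FFi; first exact: SW.1.
by exists F => //; apply: upset_open => //; exact: SW.1.
Qed.

Lemma SI2_openI {X : topologicalType} (W1 W2 : set X) :
  SI2_open W1 -> SI2_open W2 -> SI2_open (W1 `&` W2).
Proof.
move=> [o1 S1] [o2 S2]; split; first exact: openI.
move=> F IrrF [y [cy [w1 w2]]].
apply: Irr_meet => //.
  by apply: S1 => //; exists y.
by apply: S2 => //; exists y.
Qed.

Lemma SI2_GSI2open {X : topologicalType} (U : set X) : SI2_open U -> GSI2_open U.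
Proof. by move=> SU I x x0 /GSI2_SI2 /(_ U SU). Qed.

Lemma GSI2open_SI2 {X : topologicalType} (U : set X) : GSI2_open U -> SI2_open U.
Proof.
move=> GU; split.
  rewrite openE => x Ux.
  pose B := [set V : set X | open V /\ V x].
  have h : base_ok B.
    split.
    - by exists setT; split => //; exact: openT.
    - by move=> W [_ Wx]; exists x.
    - move=> W1 W2 [o1 x1] [o2 x2]; exists (W1 `&` W2) => //.
      by split => //; exact: openI.
  have conv : GSI2_conv (@bfun X B h) x.
    exists [set [set x]]; split.
    - by move=> F /= ->; split; [exact: finite_set1|exists x].
    - split.
        move=> Q [F /= -> <-]; apply: QX_upset; split; [exact: finite_set1|by exists x].
      split; first by exists (upset [set x]); exists [set x].
      move=> O1 O2 _ _ H.
      have : [set upset F | F in [set [set x]]] (upset [set x]) by exists [set x].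
      move=> /H [h1|h1]; [left|right] => Q [F /= -> <-] //.
    - move=> V oV [F /= -> FV]; apply/bnet_ev; exists V => //; split => //.
      by apply: FV; apply: upset_sub.
    - by move=> y /(_ [set x] erefl).
  have /bnet_ev [V [oV Vx] VU] := GU _ _ _ conv Ux.
  by rewrite /interior nbhsE; exists V.
move=> D IrrD [z [cutz Uz]].
pose B := [set W : set X | exists V, [/\ open V, W = D `&` V & D `&` V !=set0]].
have h : base_ok B.
  split.
  - have [d Dd] := IrrD.1; exists (D `&` setT); exists setT; split => //.
      exact: openT.
    by exists d.
  - by move=> W [V [_ -> ne]].
  - move=> W1 W2 [V1 [o1 -> n1]] [V2 [o2 -> n2]].
    exists (D `&` (V1 `&` V2)).
      exists (V1 `&` V2); split => //; first exact: openI.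
      exact: Irr_meet.
    by move=> y [Dy [V1y V2y]].
have conv : GSI2_conv (@bfun X B h) z.
  exists [set [set d] | d in D]; split.
  - by move=> F [d Dd <-]; split; [exact: finite_set1|exists d].
  - split.
      by move=> Q [F [d Dd <-] <-]; apply: QX_upset; split; [exact: finite_set1|exists d].
    split.
      by have [d Dd] := IrrD.1; exists (upset [set d]); exists [set d] => //; exists d.
    move=> O1 O2 [_ pO1] [_ pO2] H; apply: contrapT => /not_orP [n1 n2].
    have [Q1 [[F1 [d1 Dd1 <-] <-] O1Q1]] : exists Q, [set upset F | F in [set [set d] | d in D]] Q /\ O1 Q.
      apply: contrapT => nex; apply: n1 => Q iQ O1Q; apply: nex; exists Q; split => //.
    have [Q2 [[F2 [d2 Dd2 <-] <-] O2Q2]] : exists Q, [set upset F | F in [set [set d] | d in D]] Q /\ O2 Q.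
      apply: contrapT => nex; apply: n2 => Q iQ O2Q; apply: nex; exists Q; split => //.
    have [U1 [oU1 sU1 bU1]] := pO1 _ O1Q1.
    have [U2 [oU2 sU2 bU2]] := pO2 _ O2Q2.
    have m1 : D `&` U1 !=set0.
      by exists d1; split => //; apply: sU1; apply/upset1; exact: spec_refl.
    have m2 : D `&` U2 !=set0.
      by exists d2; split => //; apply: sU2; apply/upset1; exact: spec_refl.
    have [d3 [Dd3 [U1d3 U2d3]]] := @Irr_meet X D U1 U2 IrrD oU1 oU2 m1 m2.
    have Qd3 : QX (upset [set d3]) by apply: QX_upset; split; [exact: finite_set1|exists d3].
    have b1 : O1 (upset [set d3]).
      by apply: bU1; split => //; apply: upset_open => // ? ->.
    have b2 : O2 (upset [set d3]).
      by apply: bU2; split => //; apply: upset_open => // ? ->.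
    have : [set upset F | F in [set [set d] | d in D]] (upset [set d3]).
      by exists [set d3] => //; exists d3.
    by move=> /H [] /(_ _).
  - move=> V oV [F [d Dd <-] FV]; apply/bnet_ev; exists (D `&` V).
      exists V; split => //; exists d; split => //.
      by apply: FV; apply: upset_sub.
    by move=> ? [].
  - move=> y Hy; apply/upset1; apply: cutz => d Dd; apply/upset1.
    by apply: Hy; exists d.
have /bnet_ev [W [V [oV -> [d [Dd Vd]]]] WU] := GU _ _ _ conv Uz.
by exists d; split => //; apply: WU.
Qed.

Lemma GSI2open_eq {X : topologicalType} : @GSI2_open X = @SI2_open X.
Proof.
apply/funext => U; apply/propext; split; [exact: GSI2open_SI2|exact: SI2_GSI2open].
Qed.

Lemma main2 {X : topologicalType} :
  (forall (I : directed_set) (x : I -> X) (x0 : X),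
      GSI2_conv x x0 <-> net_conv_in (@SI2_open X) x x0) <->
   strongly_QI2_continuous (X := X).
Proof.
split; last first.
  move=> [QI2 strong] I x x0; split; first exact: GSI2_SI2.
  move=> conv; exists [set F | finite_nonempty F /\ ll_I2 F [set x0]]; split.
  - by move=> F [].
  - exact: (QI2 x0).1.
  - move=> U oU [F [fnF llF] sub].
    have [W [SW Wx WU]] := strong F x0 U fnF llF oU (subset_trans (@upset_sub X F) sub).
    exact: ev_mono WU (conv W SW Wx).
  - move=> y Hy; rewrite (QI2 x0).2 => Q [F FF_F <-]; exact: Hy.
move=> H.
have nb : forall x : X, exists FF : set (set X),
    [/\ FF `<=` finite_nonempty, PS_irreducible [set upset F | F in FF],
        \bigcap_(F in FF) upset F `<=` upset [set x] &
        forall F, FF F -> ll_I2 F [set x]].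
  move=> x; pose B := [set W : set X | SI2_open W /\ W x].
  have h : base_ok B.
    split.
    - exists setT; split => //; split; first exact: openT.
      by move=> F [[f Ff] _] _; exists f.
    - by move=> W [_ Wx]; exists x.
    - move=> W1 W2 [S1 x1] [S2 x2]; exists (W1 `&` W2) => //.
      by split => //; exact: SI2_openI.
  have conv : net_conv_in (@SI2_open X) (@bfun X B h) x.
    by move=> U SU Ux; apply/bnet_ev; exists U.
  have [FF [FFfin FFirr FFi FFx]] := (H _ _ _).2 conv.
  exists FF; split => // F FF_F D IrrD [y [cutDy /= yx]]; subst y.
  apply: contrapT => nm.
  pose V := ~` closure D.
  have oV : open V by rewrite openC; exact: closed_closure.
  have FV : upset F `<=` V.
    by apply: upset_open => // f Ff cDf; apply: nm; exists f.
  have /bnet_ev [W [[oW SW] Wx] WV] := FFi V oV (ex_intro2 _ _ F FF_F FV).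
  have [d [Dd Wd]] := SW D IrrD (ex_intro _ x (conj cutDy Wx)).
  by apply: (WV d Wd); exact: subset_closure.
have strong : forall (F : set X) (x : X) (U : set X), finite_nonempty F ->
    ll_I2 F [set x] -> open U -> F `<=` U ->
    exists W, [/\ SI2_open W, W x & W `<=` U].
  move=> F x U fnF llF oU FU.
  apply: contrapT => nex.
  pose B := [set W' : set X | exists W, [/\ SI2_open W, W x & W' = W `&` ~` U]].
  have neB : forall W, SI2_open W -> W x -> W `&` ~` U !=set0.
    move=> W SW Wx; apply: contrapT => ne; apply: nex; exists W; split => // y Wy.
    by apply: contrapT => nUy; apply: ne; exists y.
  have SIT : SI2_open (@setT X).
    split; first exact: openT.
    by move=> F' [[f Ff] _] _; exists f.
  have h : base_ok B.
    split.
    - by exists (setT `&` ~` U); exists setT.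
    - by move=> W [W0 [S0 x0 ->]]; exact: neB.
    - move=> W1 W2 [V1 [S1 x1 ->]] [V2 [S2 x2 ->]].
      exists ((V1 `&` V2) `&` ~` U).
        by exists (V1 `&` V2); split => //; exact: SI2_openI.
      by move=> y [[? ?] ?].
  have conv : net_conv_in (@SI2_open X) (@bfun X B h) x.
    move=> U0 SU Ux; apply/bnet_ev; exists (U0 `&` ~` U).
      by exists U0.
    by move=> ? [].
  have [FF [FFfin FFirr FFi FFx]] := (H _ _ _).2 conv.
  have cC : closed (~` U) by rewrite closedC.
  have [|A [cA AC IrrA cutA _]] := rudin FFfin FFirr FFx cC.
    move=> F' FF_F'; apply: contrapT => nm.
    have F'U : upset F' `<=` U.
      apply: upset_open => // f Ff; apply: contrapT => nUf; apply: nm; exists f.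
      by split.
    have /bnet_ev [W [W0 [S0 x0 ->]] WU] := FFi U oU (ex_intro2 _ _ F' FF_F' F'U).
    have [y [W0y nUy]] := neB W0 S0 x0.
    exact: nUy (WU y (conj W0y nUy)).
  have [f [Ff cAf]] := llF A IrrA (ex_intro _ x (conj cutA erefl)).
  rewrite -(closure_id A).1 in cAf => //.
  exact: AC f cAf (FU f Ff).
split => // x; have [FF [FFfin FFirr FFx FFll]] := nb x.
have inw : forall F, FF F -> w_set x (upset F).
  by move=> F FF_F; exists F => //; split; [exact: FFfin|exact: FFll].
split.
  split; first by move=> Q [F [fnF _] <-]; exact: QX_upset.
  split.
    by have [_ [[Q [F FF_F _]] _]] := FFirr; exists (upset F); exact: inw.
  move=> O1 O2 [_ pO1] [_ pO2] Hs; apply: contrapT => /not_orP [n1 n2].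
  have [Q1 [[F1 [fn1 ll1] <-] O1Q1]] : exists Q, w_set x Q /\ O1 Q.
    apply: contrapT => nex; apply: n1 => Q iQ O1Q; apply: nex; exists Q; split => //.
  have [Q2 [[F2 [fn2 ll2] <-] O2Q2]] : exists Q, w_set x Q /\ O2 Q.
    apply: contrapT => nex; apply: n2 => Q iQ O2Q; apply: nex; exists Q; split => //.
  have [U1 [oU1 sU1 bU1]] := pO1 _ O1Q1.
  have [U2 [oU2 sU2 bU2]] := pO2 _ O2Q2.
  have [W1 [S1 x1 W1U]] := strong F1 x U1 fn1 ll1 oU1 (subset_trans (@upset_sub X F1) sU1).
  have [W2 [S2 x2 W2U]] := strong F2 x U2 fn2 ll2 oU2 (subset_trans (@upset_sub X F2) sU2).
  have [F FF_F FW] := R_core FFfin FFirr FFx (SI2_openI S1 S2) (conj x1 x2).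
  have uW : upset F `<=` W1 `&` W2.
    by apply: upset_open => //; apply: openI; [exact: S1.1|exact: S2.1].
  have QF : QX (upset F) by apply: QX_upset; exact: FFfin.
  have b1 : O1 (upset F) by apply: bU1; split => // y /uW [/W1U].
  have b2 : O2 (upset F) by apply: bU2; split => // y /uW [_ /W2U].
  by case: (Hs _ (inw F FF_F)).
apply/seteqP; split.
  move=> y /upset1 xy Q [F [fnF llF] <-].
  have [f [Ff fx]] := llF [set x] (@Irr1 X x) (ex_intro _ x (conj (@cut1 X x) erefl)).
  by exists f => //; exact: spec_trans fx xy.
by move=> y Hy; apply: FFx => F FF_F; apply: Hy; exact: inw.
Qed.

Theorem theorem4p12 (X : topologicalType) (T0 : @kolmogorov_space X) :
  ((forall (I : directed_set) (x : I -> X) (x0 : X),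
      GSI2_conv x x0 <-> net_conv_in (@GSI2_open X) x x0) <->
   strongly_QI2_continuous (X := X)) /\
  ((forall (I : directed_set) (x : I -> X) (x0 : X),
      GSI2_conv x x0 <-> net_conv_in (@SI2_open X) x x0) <->
   strongly_QI2_continuous (X := X)).
Proof.
split; last exact: main2.
rewrite GSI2open_eq; exact: main2.
Qed.
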